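(* Let $((x_n,y_n))_{n\in\mathbb N}$ be a sequence in $[0,\infty)^2$ such that $\sum_n(x_n,y_n)$ converges, and assume that $(a,b)\times(c,d)$ is a rectangular gap of $E(x_n,y_n)$. Let $k:=\max\{n\in\mathbb N:\ x_n\geq b-a \text{ or } y_n\geq d-c\}$ (this set of indices is finite and non-empty). Then $(b,d)\in F_k$, and there exists $f\in F_k$ such that $(a,c)=f+\sum_{n>k}(x_n,y_n)$.
   Context: $E(x_n,y_n):=\{\sum_{n\in B}(x_n,y_n):\ B\subset\mathbb N\}$ is the achievement set of the series, and $F_k:=\{\sum_{i\in B}(x_i,y_i):\ B\subset\{1,\dots,k\}\}$ is the set of $k$-initial subsums. For $A\subset\mathbb R^2$ and reals $a<b$, $c<d$, the set $(a,b)\times(c,d)$ is a rectangular gap of $A$ if $([a,b]\times[c,d])\cap A=\{(a,c),(b,d)\}$. *)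

(* Defs.v *)
From Stdlib Require Import Reals.
From Coquelicot Require Import Coquelicot.
Open Scope R_scope.

(* Indices are 0-based: the paper's N = {1,2,...} is shifted to nat = {0,1,...}. *)

Definition restrict (B : nat -> bool) (u : nat -> R) : nat -> R :=
  fun n => if B n then u n else 0.

Definition achievement_set (x y : nat -> R) (p : R * R) : Prop :=
  exists B : nat -> bool,
    is_series (restrict B x) (fst p) /\ is_series (restrict B y) (snd p).

Definition initial_subsums (x y : nat -> R) (k : nat) (p : R * R) : Prop :=
  exists B : nat -> bool,
    fst p = sum_f_R0 (restrict B x) k /\ snd p = sum_f_R0 (restrict B y) k.

Definition rectangular_gap (A : R * R -> Prop) (a b c d : R) : Prop :=
  a < b /\ c < d /\
  forall p : R * R,
    (a <= fst p <= b /\ c <= snd p <= d /\ A p) <-> (p = (a, c) \/ p = (b, d)).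

Definition tail_sum (u : nat -> R) (k : nat) : R := Series (fun n => u (S k + n)%nat).

(* Main.v *)
Require Import Defs.
From Stdlib Require Import Reals Lra Lia Classical.
From Coquelicot Require Import Coquelicot.
Open Scope R_scope.

Lemma delta_sum (n : nat) (c : R) (N : nat) :
  sum_n (fun m => if Nat.eqb m n then c else 0) N = if Nat.leb n N then c else 0.
Proof.
  induction N as [|N IH].
  - rewrite sum_O. destruct n; simpl; reflexivity.
  - rewrite sum_Sn, IH. change (plus ?u ?v) with (Rplus u v). cbv beta.
    destruct (Nat.eqb (S N) n) eqn:E.
    + apply Nat.eqb_eq in E. subst n.
      replace (Nat.leb (S N) N) with false by (symmetry; apply Nat.leb_gt; lia).
      rewrite Nat.leb_refl. lra.
    + destruct (Nat.leb n N) eqn:E2.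
      * apply Nat.leb_le in E2.
        replace (Nat.leb n (S N)) with true by (symmetry; apply Nat.leb_le; lia). lra.
      * apply Nat.leb_gt in E2. apply Nat.eqb_neq in E.
        replace (Nat.leb n (S N)) with false by (symmetry; apply Nat.leb_gt; lia). lra.
Qed.

Lemma delta_series (n : nat) (c : R) :
  is_series (fun m => if Nat.eqb m n then c else 0) c.
Proof.
  unfold is_series.
  apply (filterlim_ext_loc (fun _ => c)).
  - exists n. intros N HN. rewrite delta_sum.
    replace (Nat.leb n N) with true by (symmetry; apply Nat.leb_le; lia). reflexivity.
  - apply filterlim_const.
Qed.

Lemma zero_series : is_series (fun _ : nat => 0) 0.
Proof.
  apply (is_series_ext (fun m => if Nat.eqb m 0 then 0 else 0)).
  - intros m; destruct (Nat.eqb m 0); reflexivity.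
  - apply delta_series.
Qed.

Lemma toggle_series (B : nat -> bool) (u : nat -> R) (s : R) (n : nat) (bv : bool) :
  is_series (restrict B u) s ->
  is_series (restrict (fun m => if Nat.eqb m n then bv else B m) u)
    (s + ((if bv then u n else 0) - (if B n then u n else 0))).
Proof.
  intros H.
  assert (H2 := is_series_plus _ _ _ _ H
     (delta_series n ((if bv then u n else 0) - (if B n then u n else 0)))).
  eapply is_series_ext; [|exact H2].
  intros m. unfold plus; simpl. unfold restrict.
  destruct (Nat.eqb m n) eqn:E.
  - apply Nat.eqb_eq in E; subst m. destruct bv, (B n); lra.
  - lra.
Qed.

Lemma restrict_ex (B : nat -> bool) (u : nat -> R) :
  (forall n, 0 <= u n) -> ex_series u -> ex_series (restrict B u).
Proof.
  intros hu cu. apply (@ex_series_le R_AbsRing R_CompleteNormedModule _ u); auto.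
  intros n. unfold restrict, norm; simpl. unfold abs; simpl.
  destruct (B n); [rewrite Rabs_right; [lra|apply Rle_ge, hu]|].
  rewrite Rabs_R0; apply hu.
Qed.

Lemma restrict_nonneg (B : nat -> bool) (u : nat -> R) s :
  (forall n, 0 <= u n) -> ex_series u -> is_series (restrict B u) s -> 0 <= s.
Proof.
  intros hu cu H.
  rewrite <- (is_series_unique _ _ H).
  rewrite <- (is_series_unique _ _ zero_series).
  apply Series_le; [|apply restrict_ex; auto].
  intros n; unfold restrict; destruct (B n); split; try lra; apply hu.
Qed.

Lemma split_series (u : nat -> R) s k :
  is_series u s -> s = sum_f_R0 u k + Series (fun n => u (S k + n)%nat).
Proof.
  intros H. rewrite <- (is_series_unique _ _ H).
  rewrite (Series_incr_n u (S k)); [reflexivity|lia|eexists; exact H].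
Qed.

Lemma max_exists (P : nat -> Prop) N :
  (forall n, (N <= n)%nat -> ~ P n) -> (exists n, P n) ->
  exists k, P k /\ forall n, P n -> (n <= k)%nat.
Proof.
  revert P. induction N as [|M IH]; intros P HN [n Hn].
  - exfalso. apply (HN n); [lia|exact Hn].
  - destruct (classic (P M)) as [HM|HM].
    + exists M. split; auto. intros m Hm.
      destruct (Compare_dec.le_lt_dec m M); auto. exfalso. apply (HN m); [lia|auto].
    + apply IH; [|eauto]. intros m Hm. destruct (Nat.eq_dec m M); [subst; auto|].
      apply HN; lia.
Qed.

Theorem mainTheorem17 (x y : nat -> R) (a b c d : R)
  (hx : forall n, 0 <= x n) (hy : forall n, 0 <= y n)
  (cx : ex_series x) (cy : ex_series y)
  (hgap : rectangular_gap (achievement_set x y) a b c d) :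
  let S := fun n : nat => b - a <= x n \/ d - c <= y n in
  (exists k : nat, S k /\ forall n, S n -> (n <= k)%nat) /\
  (forall k : nat, S k -> (forall n, S n -> (n <= k)%nat) ->
     initial_subsums x y k (b, d) /\
     exists f : R * R, initial_subsums x y k f /\
       a = fst f + tail_sum x k /\ c = snd f + tail_sum y k).
Proof.
  intros S.
  destruct hgap as [hab [hcd hG]].
  assert (Eac : achievement_set x y (a, c)).
  { destruct (proj2 (hG (a, c)) (or_introl eq_refl)) as [_ [_ H]]; exact H. }
  assert (Ebd : achievement_set x y (b, d)).
  { destruct (proj2 (hG (b, d)) (or_intror eq_refl)) as [_ [_ H]]; exact H. }
  destruct Eac as [B1 [H1x H1y]]. destruct Ebd as [B2 [H2x H2y]].
  simpl in H1x, H1y, H2x, H2y.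
  assert (ha : 0 <= a) by (eapply restrict_nonneg; [exact hx|exact cx|exact H1x]).
  assert (Rem : forall n, B2 n = true -> ~ S n -> x n = 0 /\ y n = 0).
  { intros n Bn nS. unfold S in nS.
    assert (lx : x n < b - a) by (apply Rnot_le_lt; tauto).
    assert (ly : y n < d - c) by (apply Rnot_le_lt; tauto).
    pose proof (toggle_series B2 x b n false H2x) as Tx.
    pose proof (toggle_series B2 y d n false H2y) as Ty.
    rewrite Bn in Tx, Ty.
    assert (HE : achievement_set x y (b - x n, d - y n)).
    { eexists; split; simpl.
      - replace (b - x n) with (b + (0 - x n)) by ring. exact Tx.
      - replace (d - y n) with (d + (0 - y n)) by ring. exact Ty. }
    pose proof (hx n); pose proof (hy n).
    assert (HP := proj1 (hG (b - x n, d - y n))). simpl in HP.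
    destruct HP as [HP|HP].
    - repeat split; try lra. exact HE.
    - injection HP; intros; lra.
    - injection HP; intros; lra. }
  assert (Add : forall n, B1 n = false -> ~ S n -> x n = 0 /\ y n = 0).
  { intros n Bn nS. unfold S in nS.
    assert (lx : x n < b - a) by (apply Rnot_le_lt; tauto).
    assert (ly : y n < d - c) by (apply Rnot_le_lt; tauto).
    pose proof (toggle_series B1 x a n true H1x) as Tx.
    pose proof (toggle_series B1 y c n true H1y) as Ty.
    rewrite Bn in Tx, Ty.
    assert (HE : achievement_set x y (a + x n, c + y n)).
    { eexists; split; simpl.
      - replace (a + x n) with (a + (x n - 0)) by ring. exact Tx.
      - replace (c + y n) with (c + (y n - 0)) by ring. exact Ty. }
    pose proof (hx n); pose proof (hy n).
    assert (HP := proj1 (hG (a + x n, c + y n))). simpl in HP.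
    destruct HP as [HP|HP].
    - repeat split; try lra. exact HE.
    - injection HP; intros; lra.
    - injection HP; intros; lra. }
  split.
  -
    assert (Hlx := proj1 (is_lim_seq_Reals _ _) (ex_series_lim_0 _ cx)).
    assert (Hly := proj1 (is_lim_seq_Reals _ _) (ex_series_lim_0 _ cy)).
    destruct (Hlx (b - a) ltac:(lra)) as [N1 HN1].
    destruct (Hly (d - c) ltac:(lra)) as [N2 HN2].
    apply (max_exists S (N1 + N2)).
    + intros n Hn HS. specialize (HN1 n ltac:(lia)). specialize (HN2 n ltac:(lia)).
      unfold R_dist in HN1, HN2. rewrite Rminus_0_r in HN1, HN2.
      rewrite Rabs_right in HN1 by (apply Rle_ge, hx).
      rewrite Rabs_right in HN2 by (apply Rle_ge, hy).
      unfold S in HS; lra.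
    + apply NNPP; intros Hno.
      assert (Z : forall n, restrict B2 x n = 0).
      { intros n; unfold restrict. destruct (B2 n) eqn:E; auto.
        apply (Rem n E). intros HS; apply Hno; eauto. }
      assert (b = 0).
      { rewrite <- (is_series_unique _ _ H2x).
        rewrite (Series_ext _ (fun _ => 0) Z). apply is_series_unique, zero_series. }
      lra.
  - intros k Sk Kmax.
    assert (nS : forall n, (k < n)%nat -> ~ S n).
    { intros n Hn HS. specialize (Kmax n HS). lia. }
    split.
    + exists B2. simpl. split.
      * rewrite (split_series _ _ k H2x).
        rewrite (Series_ext _ (fun _ => 0)).
        -- rewrite (is_series_unique _ _ zero_series). ring.
        -- intros n. unfold restrict. destruct (B2 (Datatypes.S k + n)%nat) eqn:E; auto.
           apply (Rem _ E), nS; lia.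
      * rewrite (split_series _ _ k H2y).
        rewrite (Series_ext _ (fun _ => 0)).
        -- rewrite (is_series_unique _ _ zero_series). ring.
        -- intros n. unfold restrict. destruct (B2 (Datatypes.S k + n)%nat) eqn:E; auto.
           apply (Rem _ E), nS; lia.
    + exists (sum_f_R0 (restrict B1 x) k, sum_f_R0 (restrict B1 y) k).
      split; [exists B1; simpl; split; reflexivity|]. simpl. unfold tail_sum.
      split.
      * rewrite (split_series _ _ k H1x). f_equal. apply Series_ext.
        intros n. unfold restrict. destruct (B1 (Datatypes.S k + n)%nat) eqn:E; auto.
        symmetry. apply (Add _ E), nS; lia.
      * rewrite (split_series _ _ k H1y). f_equal. apply Series_ext.
        intros n. unfold restrict. destruct (B1 (Datatypes.S k + n)%nat) eqn:E; auto.
        symmetry. apply (Add _ E), nS; lia.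
Qed.
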